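(* For any fixed finite tree $T$ (with at least $2$ vertices), $$\lim_{k\to\infty}\delta(S_k,T)=1,$$ where $S_k$ is the star on $k$ vertices and $\delta(S,T)=\lim_{n\to\infty}\mathrm{TV}(\mathrm{PA}(n,S),\mathrm{PA}(n,T))$.
   Context: For $n\ge k\ge 2$ and a tree $T$ on $k$ vertices, the random tree $\mathrm{PA}(n,T)$ is defined inductively: $\mathrm{PA}(k,T)=T$, and $\mathrm{PA}(n+1,T)$ is obtained from $\mathrm{PA}(n,T)$ by adding a new vertex $u$ and one edge $uv$, where $v$ is chosen among the vertices of $\mathrm{PA}(n,T)$ with probability $d_{\mathrm{PA}(n,T)}(v)/(2(n-1))$ ($d_G(v)$ denotes degree). $\mathrm{TV}$ denotes total variation distance between the laws of the random trees (viewed up to isomorphism); $\mathrm{TV}(\mathrm{PA}(n,S),\mathrm{PA}(n,T))$ is non-increasing in $n$ for $n\ge\max(|S|,|T|)$, so the limit exists. *)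

(* Defs.v *)
From HB Require Import structures.
From mathcomp Require Import all_boot all_order all_algebra all_fingroup.
From mathcomp Require Import all_classical all_reals all_analysis.
Set Implicit Arguments. Unset Strict Implicit. Unset Printing Implicit Defensive.
Import Order.TTheory GRing.Theory Num.Theory.
Local Open Scope ring_scope.

(* A (simple, undirected) graph on the vertex set 'I_n, stored as the set of
   ordered pairs (x,y) such that xy is an edge (so each edge appears twice). *)
Definition graph (n : nat) := {set ('I_n * 'I_n)}.

Definition adj n (G : graph n) : rel 'I_n := fun x y => (x, y) \in G.

Definition is_tree n (G : graph n) : Prop :=
  [/\ (forall x y, ((x, y) \in G) = ((y, x) \in G)),
      (forall x, (x, x) \notin G),
      #|G| = (2 * n.-1)%N &
      (forall x y, connect (adj G) x y)].

Definition star (k : nat) : graph k :=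
  [set e : 'I_k * 'I_k | ((val e.1 == 0%N) && (val e.2 != 0%N))
                      || ((val e.2 == 0%N) && (val e.1 != 0%N))].

Definition deg n (G : graph n) (v : 'I_n) : nat := #|[set w | (v, w) \in G]|.

Definition emb k n (T : graph k) : graph n :=
  [set e : 'I_n * 'I_n |
    [exists f in T, (val f.1 == val e.1) && (val f.2 == val e.2)]].

Definition ext m (H : graph m) (v : 'I_m) : graph m.+1 :=
  [set e : 'I_m.+1 * 'I_m.+1 |
    [|| [exists f in H, (val f.1 == val e.1) && (val f.2 == val e.2)],
        (val e.1 == m) && (val e.2 == val v) |
        (val e.2 == m) && (val e.1 == val v)]].

(* PAlaw T n G = probability that PA(n,T) is (the labelled graph) G, where the
   vertices of T keep their labels 0..k-1 and the j-th added vertex gets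
   label j.  Meaningful for n >= k. *)
Fixpoint PAlaw (R : realType) k (T : graph k) (n : nat) : graph n -> R :=
  match n with
  | 0 => fun G => (G == emb 0 T)%:R
  | m.+1 =>
    if (m.+1 <= k)%N then fun G => (G == emb m.+1 T)%:R
    else fun G =>
      \sum_(H : graph m) \sum_(v : 'I_m)
        PAlaw R T H * ((deg H v)%:R / (2 * m.-1)%:R) * (G == ext H v)%:R
  end.

(* events invariant under relabelling = events about the isomorphism class *)
Definition iso_invariant n (A : {set graph n}) : Prop :=
  forall (p : {perm 'I_n}) (G : graph n),
    (G \in A) = ([set (p e.1, p e.2) | e in G] \in A).

Definition prob_ev (R : realType) n (P : graph n -> R) (A : {set graph n}) : R :=
  \sum_(G in A) P G.

Definition TV (R : realType) n (P Q : graph n -> R) : R :=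
  \big[Num.max/0]_(A : {set graph n} | `[< iso_invariant A >])
     `|prob_ev P A - prob_ev Q A|.

Definition TV_PA (R : realType) (n : nat) ks kt (S : graph ks) (T : graph kt) : R :=
  TV (PAlaw R S (n:=n)) (PAlaw R T (n:=n)).

(* Main.v *)
Require Import Defs.
From HB Require Import structures.
From mathcomp Require Import all_boot all_order all_algebra all_fingroup.
From mathcomp Require Import all_classical all_reals all_analysis.
From mathcomp Require Import zify ring lra.
Import Order.TTheory GRing.Theory Num.Theory.
Import numFieldNormedType.Exports.
Local Open Scope ring_scope.
Set Implicit Arguments. Unset Strict Implicit. Unset Printing Implicit Defensive.

Lemma degE n (G : graph n) x : deg G x = (\sum_y ((x, y) \in G : nat))%N.
Proof.
rewrite /deg -sum1dep_card big_mkcond /=; apply: eq_bigr => y _.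
by case: ((x, y) \in G).
Qed.

Lemma emb_id k (T : graph k) : emb k T = T.
Proof.
apply/setP => -[x y]; rewrite inE; apply/existsP/idP.
  case=> -[a b] /andP[hf /andP[/eqP h1 /eqP h2]].
  have -> : x = a by apply: val_inj.
  by have -> : y = b by apply: val_inj.
by move=> h; exists (x, y); rewrite h !eqxx.
Qed.

Section Ext.
Variables (m : nat) (H : graph m) (v : 'I_m).
Local Notation w := (widen_ord (leqnSn m)).

Lemma ext_ww x y : ((w x, w y) \in ext H v) = ((x, y) \in H).
Proof.
rewrite inE /= !(ltn_eqF (ltn_ord x)) !(ltn_eqF (ltn_ord y)) /= !orbF.
apply/existsP/idP.
  case=> -[a b] /andP[hf /andP[/eqP h1 /eqP h2]].
  have -> : x = a by apply: val_inj.
  by have -> : y = b by apply: val_inj.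
by move=> h; exists (x, y); rewrite h !eqxx.
Qed.

Lemma ext_wm x : ((w x, ord_max) \in ext H v) = (x == v).
Proof.
rewrite inE /= !(ltn_eqF (ltn_ord x)) /= eqxx /=.
case: existsP => [[[a b] /andP[_ /andP[_ /eqP h]]]|_] /=.
  by move: (ltn_ord b); rewrite h ltnn.
by [].
Qed.

Lemma ext_mw y : ((ord_max, w y) \in ext H v) = (y == v).
Proof.
rewrite inE /= !(ltn_eqF (ltn_ord y)) /= eqxx /= orbF.
case: existsP => [[[a b] /andP[_ /andP[/eqP h _]]]|_] /=.
  by move: (ltn_ord a); rewrite h ltnn.
by [].
Qed.

Lemma ext_mm : ((ord_max, ord_max) \in ext H v) = false.
Proof.
rewrite inE /= eqxx /= (gtn_eqF (ltn_ord v)) /= !orbF.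
case: existsP => [[[a b] /andP[_ /andP[/eqP h _]]]|_] //=.
by move: (ltn_ord a); rewrite h ltnn.
Qed.

Lemma deg_ext_w u : deg (ext H v) (w u) = (deg H u + (u == v))%N.
Proof.
rewrite !degE big_ord_recr /= ext_wm; congr (_ + _)%N.
by apply: eq_bigr => y _; rewrite ext_ww.
Qed.

Lemma deg_ext_m : deg (ext H v) ord_max = 1%N.
Proof.
rewrite degE big_ord_recr /= ext_mm addn0.
rewrite (bigD1 v) //= ext_mw eqxx big1 // => y hy.
by rewrite ext_mw (negbTE hy).
Qed.
End Ext.

Definition relabel n (p : {perm 'I_n}) (G : graph n) : graph n :=
  [set (p e.1, p e.2) | e in G].

Section Relabel.
Variable n : nat.
Implicit Types (p q : {perm 'I_n}) (G : graph n).

Lemma relabel_mem p G a b : ((p a, p b) \in relabel p G) = ((a, b) \in G).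
Proof.
rewrite /relabel (mem_imset (f := fun e : 'I_n * 'I_n => (p e.1, p e.2)) _ (a, b)) //.
by case=> a1 b1 [a2 b2] /= [/perm_inj -> /perm_inj ->].
Qed.

Lemma relabel_memV p G x y :
  ((x, y) \in relabel p G) = (((p^-1)%g x, (p^-1)%g y) \in G).
Proof. by rewrite -{1}(permKV p x) -{1}(permKV p y) relabel_mem. Qed.

Lemma relabelM p q G : relabel p (relabel q G) = relabel (q * p)%g G.
Proof. by apply/setP => -[x y]; rewrite !relabel_memV invMg !permM. Qed.

Lemma relabel1 G : relabel 1%g G = G.
Proof. by apply/setP => -[x y]; rewrite relabel_memV invg1 !perm1. Qed.

Lemma relabelK p : cancel (relabel p) (relabel (p^-1)%g).
Proof. by move=> G; rewrite relabelM mulgV relabel1. Qed.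

Lemma relabel_inj p : injective (relabel p).
Proof. exact: can_inj (relabelK p). Qed.

Lemma deg_relabel p G u : deg (relabel p G) (p u) = deg G u.
Proof.
rewrite !degE (reindex_inj (@perm_inj _ p)) /=.
by apply: eq_bigr => y _; rewrite relabel_mem.
Qed.
End Relabel.

Lemma liftw m (a : 'I_m) : lift ord_max a = widen_ord (leqnSn m) a.
Proof. by apply: val_inj; exact: (lift_max a). Qed.

Lemma ext_relabel m (p : {perm 'I_m}) (H : graph m) (v : 'I_m) :
  ext (relabel p H) (p v) = relabel (lift_perm ord_max ord_max p) (ext H v).
Proof.
set p' := lift_perm _ _ _.
apply/setP => -[x y].
rewrite -(permKV p' x) -(permKV p' y) relabel_mem.
move: ((p'^-1)%g x) ((p'^-1)%g y) => a b.
have hl (c : 'I_m) : p' (widen_ord (leqnSn m) c) = widen_ord (leqnSn m) (p c).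
  by rewrite -!liftw lift_perm_lift.
have hm : p' ord_max = ord_max by rewrite lift_perm_id.
case: (unliftP ord_max a) => [a'|] ->; case: (unliftP ord_max b) => [b'|] ->;
  rewrite ?liftw ?hl ?hm ?ext_ww ?ext_wm ?ext_mw ?ext_mm ?relabel_mem //;
  by rewrite (inj_eq perm_inj).
Qed.

Definition r4 (R : realType) (x : R) := x * (x + 1) * (x + 2) * (x + 3).
Definition F4 (R : realType) n (G : graph n) : R := \sum_v r4 (deg G v)%:R.
Definition D0 (R : realType) n (G : graph n) : R :=
  \sum_(v : 'I_n | val v == 0%N) (deg G v)%:R.

Lemma sum_ext_g (R : realType) m (H : graph m) v (g : nat -> R) :
  \sum_(u : 'I_m.+1) g (deg (ext H v) u) =
  \sum_u g (deg H u) + (g (deg H v).+1 - g (deg H v)) + g 1%N.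
Proof.
rewrite big_ord_recr /= deg_ext_m; under eq_bigr do rewrite deg_ext_w.
rewrite (bigD1 v) //= eqxx addn1 [in RHS](bigD1 v) //=.
rewrite (eq_bigr (fun u => g (deg H u))) => [|u /negbTE ->]; last by rewrite addn0.
ring.
Qed.

Lemma F4_ext (R : realType) m (H : graph m) v :
  F4 R (ext H v) = F4 R H +
    4 * (((deg H v)%:R + 1) * ((deg H v)%:R + 2) * ((deg H v)%:R + 3)) + 24.
Proof.
rewrite /F4 (@sum_ext_g R m H v (fun d => r4 (d%:R : R))) /r4 -addn1 natrD; ring.
Qed.

Lemma D0_ext (R : realType) m (H : graph m) v : (0 < m)%N ->
  D0 R (ext H v) = D0 R H + (val v == 0%N)%:R.
Proof.
move=> hm; rewrite /D0 big_mkcond big_ord_recr /=.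
have -> : (m == 0%N) = false by lia.
rewrite addr0; under eq_bigr do rewrite deg_ext_w.
rewrite [in RHS]big_mkcond /=.
rewrite (eq_bigr (fun u : 'I_m => (if val u == 0%N then (deg H u)%:R else 0) +
   (if val u == 0%N then (u == v)%:R else 0 : R))); last first.
  by move=> u _; case: (val u == 0%N); rewrite ?natrD ?addr0.
rewrite big_split /=; congr (_ + _).
rewrite (bigD1 v) //= eqxx big1 ?addr0 //=; first by case: (val v == 0%N).
by move=> u /negbTE ->; case: (val u == 0%N).
Qed.

Section TVgen.
Variables (R : realType) (n : nat).
Implicit Types (P Q f : graph n -> R) (A : {set graph n}).

Lemma probE P A : prob_ev P A = \sum_G P G * (G \in A)%:R.
Proof.
rewrite /prob_ev big_mkcond; apply: eq_bigr => G _.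
by case: (G \in A); rewrite /= ?mulr1n ?mulr0n ?mulr1 ?mulr0.
Qed.

Lemma TV_ge P Q A : iso_invariant A -> `|prob_ev P A - prob_ev Q A| <= TV P Q.
Proof.
move=> hA; rewrite /TV (bigD1 A) /=; last exact/asboolP.
by rewrite le_max lexx.
Qed.

Lemma TV_ge0 P Q : 0 <= TV P Q.
Proof.
rewrite /TV; apply: (big_ind (fun x => 0 <= x)) => //.
by move=> x y hx _; rewrite le_max hx.
Qed.

Lemma TV_le P Q c : 0 <= c ->
  (forall A, iso_invariant A -> `|prob_ev P A - prob_ev Q A| <= c) ->
  TV P Q <= c.
Proof.
move=> hc hA; rewrite /TV; apply: (big_ind (fun x => x <= c)) => //.
  by move=> x y hx hy; rewrite ge_max hx hy.
by move=> A /asboolP; apply: hA.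
Qed.

Lemma prob01 P A : (forall G, 0 <= P G) -> \sum_G P G = 1 ->
  0 <= prob_ev P A <= 1.
Proof.
move=> h0 h1; rewrite /prob_ev sumr_ge0 //=.
rewrite -h1 [X in _ <= X](bigID (fun G => G \in A)) /= lerDl.
by apply: sumr_ge0.
Qed.

Lemma TV_le1 P Q : (forall G, 0 <= P G) -> \sum_G P G = 1 ->
  (forall G, 0 <= Q G) -> \sum_G Q G = 1 -> TV P Q <= 1.
Proof.
move=> hP0 hP1 hQ0 hQ1; apply: TV_le => // A _.
have /andP[a0 a1] := prob01 A hP0 hP1; have /andP[b0 b1] := prob01 A hQ0 hQ1.
rewrite ler_norml; apply/andP; split; lra.
Qed.

Definition sym P (G : graph n) := \sum_(p : {perm 'I_n}) P (relabel p G).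
Definition invf f := forall p G, f (relabel p G) = f G.

Lemma sum_sym P f : invf f ->
  \sum_G sym P G * f G = #|{perm 'I_n}|%:R * \sum_G P G * f G.
Proof.
move=> hf; rewrite /sym; under eq_bigr do rewrite mulr_suml.
rewrite exchange_big /= -sumr_const mulr_suml; apply: eq_bigr => p _.
rewrite mul1r (reindex_inj (@relabel_inj _ (p^-1)%g)) /=.
by apply: eq_bigr => G _; rewrite relabelM mulVg relabel1 hf.
Qed.

Lemma sym_inv P : invf (sym P).
Proof.
move=> q G; rewrite /sym [RHS](reindex_inj (mulgI q)) /=.
by apply: eq_bigr => p _; rewrite relabelM.
Qed.

Lemma TV_f P Q f : invf f -> (forall G, 0 <= f G <= 1) ->
  `|\sum_G (P G - Q G) * f G| <= TV P Q.
Proof.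
move=> hf h01.
set N : R := #|{perm 'I_n}|%:R.
have hN : 0 < N by rewrite ltr0n; apply/card_gt0P; exists 1%g.
set B := [set G | sym Q G < sym P G].
have hBi : forall p G, (G \in B) = (relabel p G \in B).
  by move=> p G; rewrite !inE !sym_inv.
have hB : iso_invariant B by move=> p G; apply: hBi.
have hBc : iso_invariant (~: B) by move=> p G; rewrite !finset.in_setC -(hBi p G).
have e : forall g, invf g -> \sum_G (P G - Q G) * g G =
    N^-1 * \sum_G (sym P G - sym Q G) * g G.
  move=> g hg; under eq_bigr do rewrite mulrBl.
  under [X in _ = _ * X]eq_bigr do rewrite mulrBl.
  rewrite !sumrB !sum_sym // -mulrBr mulKf //; exact: lt0r_neq0.
have ifB : invf (fun G => (G \in B)%:R) by move=> p G; rewrite -hBi.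
have ifBc : invf (fun G => (G \in ~: B)%:R) by move=> p G; rewrite !finset.in_setC -hBi.
have hup : \sum_G (P G - Q G) * f G <= TV P Q.
  apply: le_trans (le_trans (ler_norm _) (TV_ge P Q hB)).
  rewrite !probE -sumrB.
  under [X in _ <= X]eq_bigr do rewrite -mulrBl.
  rewrite (e f hf) (e _ ifB); rewrite ler_pM2l ?invr_gt0 //.
  apply: ler_sum => G _; have /andP[f0 f1] := h01 G; rewrite inE.
  case: ltrP => h /=.
    by rewrite mulr1n mulr1 ler_piMr // subr_ge0 ltW.
  by rewrite mulr0n mulr0; apply: mulr_le0_ge0 => //; rewrite subr_le0.
have hlo : - TV P Q <= \sum_G (P G - Q G) * f G.
  have := TV_ge P Q hBc; rewrite ler_norml => /andP[h _].
  apply: le_trans h _; rewrite !probE -sumrB.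
  under eq_bigr do rewrite -mulrBl.
  rewrite (e f hf) (e _ ifBc); rewrite ler_pM2l ?invr_gt0 //.
  apply: ler_sum => G _; have /andP[f0 f1] := h01 G; rewrite finset.in_setC inE.
  case: ltrP => h /=.
    rewrite mulr0n mulr0; apply: mulr_ge0 => //.
    by rewrite subr_ge0 ltW.
  rewrite mulr1n mulr1; rewrite -subr_le0 in h; nra.
rewrite ler_norml hup andbT; lra.
Qed.

End TVgen.

Definition gA (R : realType) m (A : {set graph m.+1}) (H : graph m) : R :=
  Num.min (\sum_v (deg H v)%:R / (2 * m.-1)%:R * (ext H v \in A)%:R) 1.

Lemma gA_inv (R : realType) m (A : {set graph m.+1}) :
  iso_invariant A -> invf (@gA R m A).
Proof.
move=> hA p H; rewrite /gA; congr (Num.min _ _).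
rewrite [LHS](reindex_inj (@perm_inj _ p)) /=; apply: eq_bigr => v _.
rewrite deg_relabel ext_relabel (hA (lift_perm ord_max ord_max p) (ext H v)).
by [].
Qed.

Lemma gA01 (R : realType) m (A : {set graph m.+1}) H : 0 <= @gA R m A H <= 1.
Proof.
rewrite /gA le_min ge_min lexx orbT ler01 !andbT /=.
apply: sumr_ge0 => v _; rewrite !mulr_ge0 ?invr_ge0 ?ler0n //.
Qed.

Lemma F4_ge0 (R : realType) n (G : graph n) : 0 <= F4 R G.
Proof.
apply: sumr_ge0 => v _; rewrite /r4 !mulr_ge0 ?addr_ge0 ?ler0n //.
Qed.

Lemma D0_F4 (R : realType) n (G : graph n) : 0 <= D0 R G /\ D0 R G ^+ 4 <= F4 R G.
Proof.
case: n G => [|n] G.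
  by rewrite /D0 big_ord0 expr0n /= lexx F4_ge0.
rewrite /D0 (big_pred1 ord0) /=; last by move=> v /=; rewrite -val_eqE.
split; first exact: ler0n.
rewrite /F4 (bigD1 ord0) //=.
set d : R := (deg G ord0)%:R.
have d0 : 0 <= d by exact: ler0n.
have hr : 0 <= \sum_(i < n.+1 | i != ord0) r4 ((deg G i)%:R : R).
  by apply: sumr_ge0 => v _; rewrite /r4 !mulr_ge0 ?addr_ge0 ?ler0n.
have h4 : d ^+ 4 <= r4 d.
  rewrite /r4 !exprS expr0 mulr1.
  have h2 : 0 <= d * d by rewrite mulr_ge0.
  have h3 : 0 <= d * (d * d) by rewrite !mulr_ge0.
  nra.
by apply: le_trans h4 _; rewrite lerDl.
Qed.

Lemma sum_eq1 m (v : 'I_m) : (\sum_(u : 'I_m) (u == v) = 1)%N.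
Proof. by rewrite (bigD1 v) //= eqxx big1 // => u /negbTE ->. Qed.

Lemma sum_deg_ext m (H : graph m) v :
  (\sum_u deg (ext H v) u = \sum_u deg H u + 2)%N.
Proof.
rewrite big_ord_recr /= deg_ext_m.
under eq_bigr do rewrite deg_ext_w.
by rewrite big_split /= sum_eq1 -addnA.
Qed.

Section PA.
Variables (R : realType) (k : nat) (T : graph k.+1).
Hypothesis hT : (\sum_v deg T v)%N = (2 * k)%N.
Hypothesis hk : (0 < k)%N.
Local Notation P := (PAlaw R T).

Lemma PA_baseE (G : graph k.+1) : P G = (G == T)%:R.
Proof. by rewrite /= leqnn emb_id. Qed.

Lemma PA_stepE m (G : graph m.+1) : (k.+1 <= m)%N ->
  P G = \sum_(H : graph m) \sum_(v : 'I_m)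
          P H * ((deg H v)%:R / (2 * m.-1)%:R) * (G == ext H v)%:R.
Proof.
move=> h; rewrite /=.
have -> : (m.+1 <= k.+1)%N = false by rewrite ltnS leqNgt h.
by [].
Qed.

Lemma PA_ge0 n (G : graph n) : 0 <= P G.
Proof.
elim: n G => [|m IH] G /=; first exact: ler0n.
case: ifP => _; first exact: ler0n.
apply: sumr_ge0 => H _; apply: sumr_ge0 => v _.
by rewrite !mulr_ge0 ?invr_ge0 ?ler0n.
Qed.

Definition Ex n (f : graph n -> R) := \sum_(G : graph n) P G * f G.

Lemma Ex_step m (f : graph m.+1 -> R) : (k.+1 <= m)%N ->
  Ex f = \sum_(H : graph m) P H *
     \sum_(v : 'I_m) ((deg H v)%:R / (2 * m.-1)%:R * f (ext H v)).
Proof.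
move=> h; rewrite /Ex.
under eq_bigr => G _ do rewrite PA_stepE // mulr_suml.
under eq_bigr => G _ do under eq_bigr => H _ do rewrite mulr_suml.
rewrite exchange_big; apply: eq_bigr => H _.
rewrite exchange_big mulr_sumr; apply: eq_bigr => v _.
rewrite (bigD1 (ext H v)) //= eqxx big1 ?addr0 => [|G /negbTE ->].
  by rewrite /= mulr1n mulr1 -mulrA.
by rewrite /= mulr0n mulr0 mul0r.
Qed.

Lemma PA_supp n (G : graph n) : (k.+1 <= n)%N -> P G != 0 ->
  (\sum_v deg G v = 2 * n.-1)%N.
Proof.
elim: n G => [|m IH] G // hle.
have [hmk|hmk] : m = k \/ (k < m)%N.
  by move: hle; rewrite ltnS leq_eqVlt => /orP[/eqP->|->]; [left|right].
  subst m; rewrite PA_baseE pnatr_eq0 eqb0 negbK => /eqP ->; exact: hT.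
move=> hne.
case/boolP: [exists H : graph m, exists v : 'I_m, (P H != 0) && (G == ext H v)];
  last first.
  move/negP => hno; move: hne; rewrite PA_stepE // big1 ?eqxx // => H _.
  rewrite big1 // => v _.
  case: (eqVneq (P H) 0) => [->|hH]; first by rewrite !mul0r.
  case: (boolP (G == ext H v)) => [hG|]; last by rewrite /= mulr0n mulr0.
  by case: hno; apply/existsP; exists H; apply/existsP; exists v; rewrite hH hG.
case/existsP => H /existsP [v /andP [hH /eqP ->]].
rewrite sum_deg_ext IH //=; lia.
Qed.

Lemma PA_s m (H : graph m) : (k.+1 <= m)%N ->
  P H * \sum_v (deg H v)%:R / (2 * m.-1)%:R = P H.
Proof.
move=> h; case: (eqVneq (P H) 0) => [->|hne]; first by rewrite mul0r.
rewrite -mulr_suml -natr_sum PA_supp // divff ?mulr1 //.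
rewrite pnatr_eq0; lia.
Qed.

Lemma PA_mass n : (k.+1 <= n)%N -> \sum_(G : graph n) P G = 1.
Proof.
elim: n => [|m IH] // hle.
have [hmk|hmk] : m = k \/ (k < m)%N.
  by move: hle; rewrite ltnS leq_eqVlt => /orP[/eqP->|->]; [left|right].
  subst m; under eq_bigr do rewrite PA_baseE.
  by rewrite (bigD1 T) //= eqxx big1 ?addr0 // => G /negbTE ->.
have := Ex_step (fun _ => 1) hmk; rewrite /Ex.
under eq_bigr do rewrite mulr1.
move=> ->; under eq_bigr do under eq_bigr do rewrite mulr1.
under eq_bigr do rewrite PA_s //.
exact: IH.
Qed.


Local Notation w m H v := ((deg H v)%:R / (2 * m.-1)%:R : R).

Lemma PA_sA m (H : graph m) (A : R) (h : 'I_m -> R) : (k.+1 <= m)%N ->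
  P H * \sum_v (w m H v * (A + h v)) =
  P H * A + P H * \sum_v (w m H v * h v).
Proof.
move=> hm; under eq_bigr do rewrite mulrDr.
by rewrite big_split /= mulrDr -mulr_suml mulrA PA_s.
Qed.

Lemma Ex_lin_step m (f : graph m.+1 -> R) (g : graph m -> R) (c A : R) :
  (k.+1 <= m)%N ->
  (forall H, P H * \sum_v (w m H v * f (ext H v)) =
             P H * g H + c * (P H * g H) + A * P H) ->
  Ex f = (1 + c) * Ex g + A.
Proof.
move=> hm hH; rewrite Ex_step //; under eq_bigr do rewrite hH.
rewrite !big_split /= -!mulr_sumr PA_mass // /Ex; ring.
Qed.

Lemma sum_wb m (H : graph m) (c : R) :
  \sum_v ((deg H v)%:R / c * (val v == 0%N)%:R) = D0 R H / c.
Proof.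
rewrite /D0 mulr_suml [RHS]big_mkcond; apply: eq_bigr => v _.
by case: (val v == 0%N); rewrite /= ?mulr1n ?mulr0n ?mulr1 ?mulr0 ?mul0r.
Qed.

Lemma Ex_F4_step m : (k.+1 <= m)%N ->
  Ex (@F4 R m.+1) = (1 + 2 / (m.-1)%:R) * Ex (@F4 R m) + 24.
Proof.
move=> hm; apply: Ex_lin_step => // H.
have hm1 : (m.-1)%:R != 0 :> R by rewrite pnatr_eq0; lia.
have e : forall v, w m H v * F4 R (ext H v) = w m H v * ((F4 R H + 24) +
    4 * (((deg H v)%:R + 1) * ((deg H v)%:R + 2) * ((deg H v)%:R + 3))).
  by move=> v; rewrite F4_ext; congr (_ * _); ring.
under eq_bigr do rewrite e.
rewrite PA_sA //.
have -> : \sum_v w m H v * (4 * (((deg H v)%:R + 1) * ((deg H v)%:R + 2) *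
     ((deg H v)%:R + 3))) = 2 / (m.-1)%:R * F4 R H.
  rewrite /F4 mulr_sumr; apply: eq_bigr => v _; rewrite /r4 natrM; field.
  by rewrite hm1.
ring.
Qed.

Lemma Ex_D0_step m : (k.+1 <= m)%N ->
  Ex (@D0 R m.+1) = (1 + 1 / (2 * m.-1)%:R) * Ex (@D0 R m).
Proof.
move=> hm; rewrite -[RHS]addr0; apply: Ex_lin_step => // H.
have hm0 : (0 < m)%N by lia.
under eq_bigr do rewrite D0_ext //.
rewrite PA_sA // sum_wb; ring.
Qed.

Lemma Ex_D02_step m : (k.+1 <= m)%N ->
  Ex (fun G : graph m.+1 => D0 R G * (D0 R G + 1)) =
  (1 + 2 / (2 * m.-1)%:R) * Ex (fun G : graph m => D0 R G * (D0 R G + 1)).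
Proof.
move=> hm; rewrite -[RHS]addr0; apply: Ex_lin_step => // H.
have e : forall v, w m H v * (D0 R (ext H v) * (D0 R (ext H v) + 1)) =
   w m H v * (D0 R H * (D0 R H + 1) + (2 * D0 R H + 2) * (val v == 0%N)%:R).
  move=> v; rewrite D0_ext; last by lia.
  by case: (val v == 0%N); rewrite /= ?mulr1n ?mulr0n; ring.
under eq_bigr do rewrite e.
rewrite PA_sA //.
have -> : \sum_v w m H v * ((2 * D0 R H + 2) * (val v == 0%N)%:R) =
   (2 * D0 R H + 2) * \sum_v (w m H v * (val v == 0%N)%:R).
  by rewrite mulr_sumr; apply: eq_bigr => v _; ring.
rewrite sum_wb; ring.
Qed.


Lemma Ex_base (f : graph k.+1 -> R) : Ex f = f T.
Proof.
rewrite /Ex (bigD1 T) // PA_baseE eqxx mulr1n mul1r big1.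
  exact: addr0.
by move=> G hG; rewrite PA_baseE (negbTE hG) /= mulr0n mul0r.
Qed.

Lemma prob_step m (A : {set graph m.+1}) : (k.+1 <= m)%N ->
  prob_ev (@PAlaw R k.+1 T m.+1) A = \sum_(H : graph m) P H * gA R A H.
Proof.
move=> hm; rewrite probE.
have := Ex_step (fun G : graph m.+1 => (G \in A)%:R) hm; rewrite /Ex => ->.
apply: eq_bigr => H _.
case: (eqVneq (P H) 0) => [->|hne]; first by rewrite !mul0r.
have s1 : \sum_v (deg H v)%:R / (2 * m.-1)%:R = 1 :> R.
  by apply: (mulfI hne); rewrite PA_s // mulr1.
rewrite /gA min_l //; rewrite -[X in _ <= X]s1; apply: ler_sum => v _.
rewrite ler_piMr ?mulr_ge0 ?invr_ge0 ?ler0n //.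
by case: (_ \in _); rewrite /= ?mulr1n ?mulr0n ?ler01.
Qed.

Lemma natm m : (k.+1 <= m)%N -> (m%:R : R) = (m.-1)%:R + 1.
Proof. by move=> hm; rewrite natr1 prednK //; lia. Qed.

Definition KF := (F4 R T + 24 * (k.+1)%:R) / ((k.+1)%:R * k%:R).

Lemma F4_bound n : (k.+1 <= n)%N ->
  Ex (@F4 R n) <= KF * (n%:R * (n.-1)%:R) - 24 * n%:R.
Proof.
elim: n => [|m IH] // hle.
have [hmk|hmk] : m = k \/ (k < m)%N.
  by move: hle; rewrite ltnS leq_eqVlt => /orP[/eqP->|->]; [left|right].
  subst m; rewrite Ex_base /= /KF divfK; first lra.
  by rewrite mulf_neq0 // pnatr_eq0 //; lia.
rewrite Ex_F4_step //= (natm (leqW hmk)) (natm hmk).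
have := IH hmk; rewrite (natm hmk).
set M : R := (m.-1)%:R; set E := Ex _.
have hM : 1 <= M by rewrite /M ler1n; lia.
have hM0 : M != 0 by apply: lt0r_neq0; lra.
have hc : 0 <= 1 + 2 / M by rewrite addr_ge0 ?divr_ge0 //; lra.
move=> /(ler_wpM2l hc) h1.
have e : (1 + 2 / M) * (KF * ((M + 1) * M) - 24 * (M + 1)) =
   KF * ((M + 1 + 1) * (M + 1)) - 24 * (M + 1 + 1) - 24 - 48 / M.
  by field.
have h3 : 0 <= 48 / M by rewrite divr_ge0 //; lra.
have e2 : (m.+1.-1)%:R = M + 1 :> R by rewrite /= (natm hmk).
lra.
Qed.

Lemma sum_sub n (p1 p2 : pred (graph n)) : (forall G, p1 G -> p2 G) ->
  \sum_(G | p1 G) P G <= \sum_(G | p2 G) P G.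
Proof.
move=> h; rewrite [X in X <= _]big_mkcond [X in _ <= X]big_mkcond.
apply: ler_sum => G _; case h1: (p1 G); first by rewrite (h _ h1).
by case: (p2 G) => //; apply: PA_ge0.
Qed.

Lemma markov n (x : R) : 0 < x ->
  \sum_(G : graph n | x <= F4 R G) P G <= Ex (@F4 R n) / x.
Proof.
move=> hx; rewrite /Ex mulr_suml.
apply: le_trans (_ : \sum_(G | x <= F4 R G) P G * F4 R G / x <= _).
  apply: ler_sum => G hG; rewrite -mulrA ler_peMr ?PA_ge0 //.
  by rewrite ler_pdivlMr // mul1r.
rewrite [X in _ <= X](bigID (fun G => x <= F4 R G)) /= lerDl.
apply: sumr_ge0 => G _; rewrite !mulr_ge0 ?PA_ge0 ?F4_ge0 ?invr_ge0 //; lra.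
Qed.


Hypothesis hd0 : 0 < D0 R T.
Local Notation d0 := (D0 R T).

Lemma c_ge0 m : 0 <= 1 / (2 * m.-1)%:R :> R.
Proof. by rewrite divr_ge0 ?ler0n. Qed.

Lemma a_pos n : (k.+1 <= n)%N -> 0 < Ex (@D0 R n).
Proof.
elim: n => [|m IH] // hle.
have [hmk|hmk] : m = k \/ (k < m)%N.
  by move: hle; rewrite ltnS leq_eqVlt => /orP[/eqP->|->]; [left|right].
  by subst m; rewrite Ex_base.
rewrite Ex_D0_step //; apply: mulr_gt0; last exact: IH.
have := c_ge0 m; lra.
Qed.

Lemma b_bound n : (k.+1 <= n)%N ->
  Ex (fun G : graph n => D0 R G * (D0 R G + 1)) * d0 <=
  (d0 + 1) * Ex (@D0 R n) ^+ 2.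
Proof.
elim: n => [|m IH] // hle.
have [hmk|hmk] : m = k \/ (k < m)%N.
  by move: hle; rewrite ltnS leq_eqVlt => /orP[/eqP->|->]; [left|right].
  by subst m; rewrite !Ex_base le_eqVlt; apply/orP; left; apply/eqP; ring.
rewrite Ex_D0_step // Ex_D02_step //.
have -> : 2 / (2 * m.-1)%:R = 2 * (1 / (2 * m.-1)%:R) :> R by rewrite mul1r.
have := c_ge0 m; set c : R := 1 / _ => hc; clearbody c.
have := IH hmk; set B : R := Ex (fun G : graph m => _); set A : R := Ex (@D0 R m) => hB.
have h1 : (1 + 2 * c) * (B * d0) <= (1 + 2 * c) * ((d0 + 1) * A ^+ 2).
  have hc2 : 0 <= 1 + 2 * c by lra.
  have hh := ler_wpM2l hc2 hB; exact: hh.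
have hd1 : 0 <= d0 + 1 by rewrite addr_ge0 ?ler01 // ltW.
have h2 : 0 <= (d0 + 1) * A ^+ 2 by rewrite mulr_ge0 // sqr_ge0.
have h3 : 0 <= c * c * ((d0 + 1) * A ^+ 2) by rewrite mulr_ge0 // mulr_ge0.
have e : (d0 + 1) * ((1 + c) * A) ^+ 2 =
   (1 + 2 * c) * ((d0 + 1) * A ^+ 2) + c * c * ((d0 + 1) * A ^+ 2).
  ring.
rewrite e -mulrA; lra.
Qed.

Lemma a4_bound n : (k.+1 <= n)%N ->
  d0 ^+ 4 * (n%:R * (n.-1)%:R) <= Ex (@D0 R n) ^+ 4 * ((k.+1)%:R * k%:R).
Proof.
elim: n => [|m IH] // hle.
have [hmk|hmk] : m = k \/ (k < m)%N.
  by move: hle; rewrite ltnS leq_eqVlt => /orP[/eqP->|->]; [left|right].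
  by subst m; rewrite !Ex_base /=.
rewrite Ex_D0_step //=.
have := IH hmk; rewrite (natm (leqW hmk)) (natm hmk).
set M : R := (m.-1)%:R; set A : R := Ex _; set K2 : R := ((k.+1)%:R * k%:R) => hA.
have hM : 1 <= M by rewrite /M ler1n; lia.
have hM0 : M != 0 by apply: lt0r_neq0; lra.
have -> : 1 / (2 * m.-1)%:R = 1 / (2 * M) :> R by rewrite natrM.
set c : R := 1 / (2 * M).
have hc : 0 <= c by rewrite divr_ge0 //; lra.
have e1 : d0 ^+ 4 * ((M + 1 + 1) * (M + 1)) =
   (1 + 4 * c) * (d0 ^+ 4 * ((M + 1) * M)) by rewrite /c; field.
have h1 : (1 + 4 * c) * (d0 ^+ 4 * ((M + 1) * M)) <= (1 + 4 * c) * (A ^+ 4 * K2).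
  have hc2 : 0 <= 1 + 4 * c by lra.
  have hh := ler_wpM2l hc2 hA; exact: hh.
have h4 : 0 <= A ^+ 4 * K2.
  by rewrite mulr_ge0 // ?exprn_even_ge0 // /K2 mulr_ge0 ?ler0n.
have h5 : (1 + 4 * c) <= (1 + c) ^+ 4.
  have hc2 : 0 <= c * c by rewrite mulr_ge0.
  have hc3 : 0 <= c * c * c by apply: mulr_ge0.
  have hc4 : 0 <= c * c * c * c by apply: mulr_ge0.
  have -> : (1 + c) ^+ 4 = 1 + 4 * c + 6 * (c * c) + 4 * (c * c * c) + c * c * c * c.
    by rewrite !exprS expr0; ring.
  lra.
rewrite e1 exprMn -[(1 + c) ^+ 4 * _ * _]mulrA.
apply: le_trans h1 _; apply: ler_wpM2r => //.
Qed.

Lemma cheb n : (k.+1 <= n)%N ->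
  \sum_(G : graph n | D0 R G < Ex (@D0 R n) / 2) P G <= 4 / d0.
Proof.
move=> hn; have ha := a_pos hn; have hb := b_bound hn.
have hm := PA_mass hn.
set a : R := Ex (@D0 R n) in ha hb *; set b : R := Ex _ in hb.
have h1 : \sum_(G : graph n | D0 R G < a / 2) P G <=
          \sum_(G : graph n) P G * (4 * (D0 R G - a) ^+ 2 / a ^+ 2).
  rewrite big_mkcond /=; apply: ler_sum => G _.
  have hX : 0 <= 4 * (D0 R G - a) ^+ 2 / a ^+ 2.
    apply: mulr_ge0; last by rewrite invr_ge0 sqr_ge0.
    by rewrite mulr_ge0 // sqr_ge0.
  case: ifP => hG; last by rewrite mulr_ge0 ?PA_ge0.
  apply: ler_peMr; first exact: PA_ge0.
  rewrite ler_pdivlMr ?exprn_gt0 // mul1r.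
  have [h0 _] := D0_F4 R G.
  nra.
have gen : forall x : R, x != 0 ->
    \sum_(G : graph n) P G * (4 * (D0 R G - x) ^+ 2 / x ^+ 2) =
    4 / x ^+ 2 * (Ex (fun G : graph n => D0 R G * (D0 R G + 1)) -
      (2 * x + 1) * Ex (@D0 R n) + x ^+ 2 * \sum_(G : graph n) P G).
  move=> x hx; rewrite /Ex [(2 * x + 1) * _]mulr_sumr [x ^+ 2 * _]mulr_sumr.
  rewrite -sumrB -big_split mulr_sumr /=; apply: eq_bigr => G _.
  by field.
have e := gen a (lt0r_neq0 ha).
rewrite e hm mulr1 in h1.
rewrite -/a -/b in h1.
apply: le_trans h1 _.
clearbody a b.
have hd : d0 != 0 by apply: lt0r_neq0.
have ha0 : a != 0 by apply: lt0r_neq0.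
rewrite -subr_le0.
have -> : 4 / a ^+ 2 * (b - (2 * a + 1) * a + a ^+ 2) - 4 / d0 =
    (4 * ((b - (2 * a + 1) * a + a ^+ 2) * d0 - a ^+ 2)) / (a ^+ 2 * d0).
  by field; rewrite hd ha0.
have hD : 0 <= (a ^+ 2 * d0)^-1 by rewrite invr_ge0 mulr_ge0 // ?sqr_ge0 // ltW.
have h0 : 0 <= a * d0 by rewrite mulr_ge0 // ltW.
have hN : 4 * ((b - (2 * a + 1) * a + a ^+ 2) * d0 - a ^+ 2) <= 0.
  move: hb; rewrite !expr2 => hb; nra.
have := mulr_le0_ge0 hN hD; exact.
Qed.

Lemma tail n : (k.+1 <= n)%N ->
  1 - 4 / d0 <= \sum_(G : graph n | (Ex (@D0 R n) / 2) ^+ 4 <= F4 R G) P G.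
Proof.
move=> hn; have := cheb hn; have hm := PA_mass hn.
have ha := a_pos hn; set a : R := Ex (@D0 R n) in ha *.
rewrite (bigID (fun G => D0 R G < a / 2)) /= in hm.
move=> hc.
have : \sum_(G : graph n | ~~ (D0 R G < a / 2)) P G <=
       \sum_(G : graph n | (a / 2) ^+ 4 <= F4 R G) P G.
  apply: sum_sub => G; rewrite -leNgt => hG.
  have [h0 h4] := D0_F4 R G.
  by apply: le_trans h4; rewrite lerXn2r // nnegrE ?divr_ge0 // ltW.
move=> h; lra.
Qed.

End PA.

Lemma sumdeg_card n (G : graph n) : (\sum_v deg G v)%N = #|G|.
Proof.
under eq_bigr do rewrite degE.
rewrite pair_big /= -sum1_card [RHS]big_mkcond /=.
by apply: eq_bigr => -[x y] _ /=; case: ((x, y) \in G).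
Qed.

Lemma sum_const1 k : (\sum_(i < k) 1 = k)%N.
Proof. by rewrite sum1_card card_ord. Qed.

Lemma deg_star0 k : deg (star k.+1) ord0 = k.
Proof.
rewrite degE big_ord_recl inE /= add0n.
rewrite -[RHS](sum_const1 k); apply: eq_bigr => i _.
by rewrite inE /=.
Qed.

Lemma deg_starS k i : deg (star k.+1) (lift ord0 i) = 1%N.
Proof.
rewrite degE big_ord_recl inE /= big1 ?addn0 // => j _.
by rewrite inE.
Qed.

Lemma sumdeg_star k : (\sum_v deg (star k.+1) v)%N = (2 * k)%N.
Proof.
rewrite big_ord_recl deg_star0.
under eq_bigr do rewrite deg_starS.
rewrite sum_const1; lia.
Qed.

Lemma D0_star (R : realType) k : D0 R (star k.+1) = k%:R.
Proof.
rewrite /D0 (big_pred1 ord0) /=; last by move=> v /=; rewrite -val_eqE.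
by rewrite deg_star0.
Qed.

Lemma F4_relabel (R : realType) n (p : {perm 'I_n}) (G : graph n) :
  F4 R (relabel p G) = F4 R G.
Proof.
rewrite /F4 [LHS](reindex_inj (@perm_inj _ p)) /=.
by apply: eq_bigr => v _; rewrite deg_relabel.
Qed.

Section Main.
Variables (R : realType) (kS kT : nat) (T : graph kT.+1).
Hypotheses (hT : (\sum_v deg T v)%N = (2 * kT)%N) (hkT : (0 < kT)%N)
  (hkS : (0 < kS)%N).

Local Notation u n := (TV_PA R n (star kS.+1) T).

Lemma TV_mono m : (kS < m)%N -> (kT < m)%N -> u m.+1 <= u m.
Proof.
move=> h1 h2; rewrite /TV_PA; apply: TV_le; first exact: TV_ge0.
move=> A hA.
rewrite (prob_step R (sumdeg_star kS) hkS A h1) (prob_step R hT hkT A h2) -sumrB.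
under eq_bigr do rewrite -mulrBl.
by apply: TV_f; [exact: gA_inv | move=> H; exact: gA01].
Qed.

Lemma TV_u_le1 n : (kS < n)%N -> (kT < n)%N -> u n <= 1.
Proof.
move=> h1 h2; apply: TV_le1.
- by move=> G; apply: PA_ge0.
- exact: (PA_mass R (sumdeg_star kS) hkS h1).
- by move=> G; apply: PA_ge0.
- exact: (PA_mass R hT hkT h2).
Qed.

Lemma KF_ge0 : 0 <= KF R T.
Proof.
by rewrite /KF divr_ge0 ?mulr_ge0 ?ler0n // addr_ge0 ?F4_ge0 // mulr_ge0 ?ler0n.
Qed.

Lemma lower n : (kS < n)%N -> (kT < n)%N ->
  1 - (4 + 32 * KF R T) / kS%:R <= u n.
Proof.
move=> h1 h2.
have hd0 : 0 < D0 R (star kS.+1) by rewrite D0_star ltr0n.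
have htail := tail (sumdeg_star kS) hkS hd0 h1.
have ha := a_pos (sumdeg_star kS) hkS hd0 h1.
have ha4 := a4_bound (sumdeg_star kS) hkS hd0 h1.
move: htail ha ha4; rewrite D0_star.
set a : R := Ex (star kS.+1) (@D0 R n) => htail ha ha4.
set A := [set G : graph n | (a / 2) ^+ 4 <= F4 R G].
have hA : iso_invariant A.
  move=> p G; rewrite !inE; have := F4_relabel R p G; rewrite /relabel => ->.
  by [].
have hP : 1 - 4 / kS%:R <= prob_ev (PAlaw R (star kS.+1) (n:=n)) A.
  by rewrite /prob_ev; under eq_bigl do rewrite inE.
set s : R := kS%:R.
set Y : R := n%:R * (n.-1)%:R.
set K : R := KF R T.
have hs : 1 <= s by rewrite /s ler1n.
have hY : 0 <= Y by rewrite /Y mulr_ge0 ?ler0n.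
have hK : 0 <= K := KF_ge0.
have hx : 0 < (a / 2) ^+ 4 by rewrite exprn_gt0 // divr_gt0.
have hQ : prob_ev (PAlaw R T (n:=n)) A <= 32 * K / s.
  rewrite /prob_ev; under eq_bigl do rewrite inE.
  apply: le_trans (markov T n hx) _.
  have hE := F4_bound R hT hkT h2.
  have hE' : Ex T (@F4 R n) <= K * Y.
    have : 0 <= 24 * (n%:R : R) by rewrite mulr_ge0 ?ler0n.
    rewrite /K /Y; lra.
  apply: le_trans (ler_wpM2r _ hE') _; first by rewrite invr_ge0 ltW.
  have c1 : Y * s <= 2 * a ^+ 4.
    have hs3 : 0 < s ^+ 3 by rewrite exprn_gt0 //; lra.
    have ha4' : s ^+ 4 * Y <= a ^+ 4 * ((s + 1) * s).
      by move: ha4; rewrite -natr1.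
    rewrite -(ler_pM2l hs3).
    have -> : s ^+ 3 * (Y * s) = s ^+ 4 * Y by ring.
    apply: le_trans ha4' _.
    have h4 : 0 <= a ^+ 4 by rewrite exprn_ge0 // ltW.
    have hh : (s + 1) * s <= s ^+ 3 * 2.
      rewrite !exprS expr0 mulr1; nra.
    have -> : s ^+ 3 * (2 * a ^+ 4) = a ^+ 4 * (s ^+ 3 * 2) by ring.
    have hh2 := ler_wpM2l h4 hh; exact: hh2.
  rewrite ler_pdivrMr //.
  have -> : 32 * K / s * (a / 2) ^+ 4 = (2 * K * a ^+ 4) / s.
    by field; lra.
  rewrite ler_pdivlMr; last lra.
  have hh := ler_wpM2l hK c1.
  have -> : K * Y * s = K * (Y * s) by ring.
  apply: le_trans hh _; rewrite le_eqVlt; apply/orP; left; apply/eqP; ring.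
have hT1 : `|prob_ev (PAlaw R (star kS.+1) (n:=n)) A - prob_ev (PAlaw R T (n:=n)) A|
   <= u n by apply: TV_ge.
have hT2 := ler_norm (prob_ev (PAlaw R (star kS.+1) (n:=n)) A - prob_ev (PAlaw R T (n:=n)) A).
have -> : 1 - (4 + 32 * KF R T) / s = 1 - 4 / s - 32 * K / s.
  by rewrite /K; field; lra.
lra.
Qed.

End Main.

Local Open Scope classical_set_scope.
Local Open Scope ring_scope.

Theorem theorem3 (R : realType) (kt : nat) (T : graph kt) :
  (2 <= kt)%N -> is_tree T ->
  exists delta : nat -> R,
    (forall k : nat, (2 <= k)%N ->
       (fun n : nat => TV_PA R n (star k) T) @ \oo --> delta k) /\
    delta @ \oo --> (1 : R).
Proof.
case: kt T => [|kT] T // hkt [_ _ hcard _].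
have hkT : (0 < kT)%N by [].
have hT : (\sum_v deg T v)%N = (2 * kT)%N by rewrite sumdeg_card hcard.
set C : R := 4 + 32 * KF R T.
have hC : 0 <= C by rewrite /C addr_ge0 // mulr_ge0 // KF_ge0.
have cv : forall kS, (0 < kS)%N -> cvgn (fun n => TV_PA R n (star kS.+1) T).
  move=> kS hkS; set N := maxn kS.+1 kT.+1.
  apply/cvg_ex.
  exists (inf (range (fun n => TV_PA R (n + N) (star kS.+1) T))).
  rewrite -(cvg_shiftn N); apply: nonincreasing_cvgn.
    apply/nonincreasing_seqP => n /=.
    apply: (TV_mono R hT hkT hkS (m := (n + N)%N)); rewrite /N; lia.
  by exists 0 => y [n _ <-]; apply: TV_ge0.
have lb : forall kS, (0 < kS)%N ->
    1 - C / kS%:R <= limn (fun n => TV_PA R n (star kS.+1) T) /\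
    limn (fun n => TV_PA R n (star kS.+1) T) <= 1.
  move=> kS hkS; split.
    apply: limr_ge; first exact: cv.
    exists (maxn kS.+1 kT.+1) => // n /= hn.
    apply: (lower R hT hkT hkS); lia.
  apply: limr_le; first exact: cv.
  exists (maxn kS.+1 kT.+1) => // n /= hn.
  apply: (TV_u_le1 R hT hkT hkS); lia.
exists (fun k => limn (fun n => TV_PA R n (star k) T)); split.
  case=> [|kS] // hk; exact: cv.
apply/cvgrPdist_le => eps heps.
have [N hN] : exists N : nat, C / eps < N%:R.
  by exists (Num.Def.archi_bound (C / eps)); apply: archi_boundP; rewrite divr_ge0 // ltW.
exists N.+2 => // k /= hk.
case: k hk => [|kS] // hk.
have hkS : (0 < kS)%N by lia.
have [lo hi] := lb kS hkS.
set d := limn _ in lo hi *.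
have hs : 0 < kS%:R :> R by rewrite ltr0n.
have hNs : (N%:R : R) <= kS%:R by rewrite ler_nat; lia.
have h1 : C / kS%:R <= eps.
  rewrite ler_pdivrMr //.
  move: hN; rewrite ltr_pdivrMr // => hN.
  have : eps * N%:R <= eps * kS%:R by rewrite ler_pM2l.
  lra.
rewrite ger0_norm; lra.
Qed.
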